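(* Let $\mathcal K$ be a finitely complete 2-category, $\tau:\Omega_\bullet\to\Omega$ a classifying discrete opfibration in $\mathcal K$, and $f:A\to\Omega$ a 1-cell. Let $\tau_f:A_\bullet\to A$ be the pullback of $\tau$ along $f$. Then $\tau_f$ is a classifying discrete opfibration if and only if $f$ is fully faithful.
   Context: A 1-cell $f:A\to B$ in a 2-category $\mathcal K$ is fully faithful if $\mathcal K(X,f):\mathcal K(X,A)\to\mathcal K(X,B)$ is a fully faithful functor for every $X$. A span $(d,E,c)$ from $A$ to $B$ ($d:E\to A$, $c:E\to B$) is a discrete fibration from $A$ to $B$ if for every $X$ the span of categories $\mathcal K(X,A)\leftarrow\mathcal K(X,E)\to\mathcal K(X,B)$ is a discrete fibration: (i) each arrow $u:a\to d(e)$ has a unique lift $\bar u$ with codomain $e$ and $c(\bar u)$ an identity; (ii) each $v:c(e)\to b$ has a unique lift $\bar v$ with domain $e$ and $d(\bar v)$ an identity; (iii) each arrow $h$ equals $\overline{d(h)}\circ\overline{c(h)}$. $\mathrm{DFib}(1,A)$ is the category of discrete fibrations from the terminal object $1$ to $A$ with span maps. $p:E\to B$ is a discrete opfibration if $(!,E,p)$ is a discrete fibration from $1$ to $B$. A discrete opfibration $\tau:\Omega_\bullet\to\Omega$ is classifying if for every $A$ the functor $G_{\tau,A}:\mathcal K(A,\Omega)\to\mathrm{DFib}(1,A)$, sending $g$ to the pullback of $\tau$ along $g$ and a 2-cell $\phi:g\Rightarrow g'$ to the map of pullbacks induced by the unique lifting of $\phi$ through $\tau$, is fully faithful. *)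

(* Defs.v *)
Definition castC {H : Type} (C : H -> H -> Type) {f f' g g' : H}
  (p : f = f') (q : g = g') (x : C f g) : C f' g' :=
  match p in _ = f0, q in _ = g0 return C f0 g0 with eq_refl, eq_refl => x end.

(* A (strict) 2-category, presented as a category with hom-categories,
   left/right whiskering (a sesquicategory) satisfying the interchange law. *)
Record TwoCat := {
  Ob : Type;
  Hom : Ob -> Ob -> Type;
  Cell : forall {A B : Ob}, Hom A B -> Hom A B -> Type;
  id1 : forall A : Ob, Hom A A;
  comp : forall {A B C : Ob}, Hom B C -> Hom A B -> Hom A C;
  assoc : forall {A B C D : Ob} (h : Hom C D) (g : Hom B C) (f : Hom A B),
      comp h (comp g f) = comp (comp h g) f;
  idl : forall {A B : Ob} (f : Hom A B), comp (id1 B) f = f;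
  idr : forall {A B : Ob} (f : Hom A B), comp f (id1 A) = f;
  id2 : forall {A B : Ob} (f : Hom A B), Cell f f;
  vcomp : forall {A B : Ob} {f g h : Hom A B}, Cell g h -> Cell f g -> Cell f h;
  vassoc : forall {A B : Ob} {f g h k : Hom A B} (x : Cell h k) (y : Cell g h) (z : Cell f g),
      vcomp x (vcomp y z) = vcomp (vcomp x y) z;
  vidl : forall {A B : Ob} {f g : Hom A B} (x : Cell f g), vcomp (id2 g) x = x;
  vidr : forall {A B : Ob} {f g : Hom A B} (x : Cell f g), vcomp x (id2 f) = x;
  lw : forall {A B C : Ob} (h : Hom B C) {f g : Hom A B}, Cell f g -> Cell (comp h f) (comp h g);
  rw : forall {A B C : Ob} {f g : Hom B C}, Cell f g -> forall k : Hom A B, Cell (comp f k) (comp g k);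
  lw_id2 : forall {A B C : Ob} (h : Hom B C) (f : Hom A B), lw h (id2 f) = id2 (comp h f);
  lw_vcomp : forall {A B C : Ob} (h : Hom B C) {f g g' : Hom A B} (x : Cell g g') (y : Cell f g),
      lw h (vcomp x y) = vcomp (lw h x) (lw h y);
  rw_id2 : forall {A B C : Ob} (f : Hom B C) (k : Hom A B), rw (id2 f) k = id2 (comp f k);
  rw_vcomp : forall {A B C : Ob} {f g g' : Hom B C} (x : Cell g g') (y : Cell f g) (k : Hom A B),
      rw (vcomp x y) k = vcomp (rw x k) (rw y k);
  lw_id1 : forall {A B : Ob} {f g : Hom A B} (x : Cell f g),
      castC (@Cell A B) (idl f) (idl g) (lw (id1 B) x) = x;
  rw_id1 : forall {A B : Ob} {f g : Hom A B} (x : Cell f g),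
      castC (@Cell A B) (idr f) (idr g) (rw x (id1 A)) = x;
  lw_comp : forall {A B C D : Ob} (k : Hom C D) (h : Hom B C) {f g : Hom A B} (x : Cell f g),
      castC (@Cell A D) (assoc k h f) (assoc k h g) (lw k (lw h x)) = lw (comp k h) x;
  rw_comp : forall {A B C D : Ob} {f g : Hom C D} (x : Cell f g) (h : Hom B C) (k : Hom A B),
      castC (@Cell A D) (assoc f h k) (assoc g h k) (rw x (comp h k)) = rw (rw x h) k;
  lw_rw : forall {A B C D : Ob} (h : Hom C D) {f g : Hom B C} (x : Cell f g) (k : Hom A B),
      castC (@Cell A D) (assoc h f k) (assoc h g k) (lw h (rw x k)) = rw (lw h x) k;
  interchange : forall {A B C : Ob} {f g : Hom A B} {h k : Hom B C} (x : Cell f g) (y : Cell h k),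
      vcomp (rw y g) (lw h x) = vcomp (lw k x) (rw y f)
}.

Section TwoCatNotions.
Variable K : TwoCat.

Definition ccast {A B : Ob K} {f f' g g' : Hom K A B} (p : f = f') (q : g = g')
  (x : Cell K f g) : Cell K f' g' := castC (@Cell K A B) p q x.

Definition is_id {X Y : Ob K} {u v : Hom K X Y} (x : Cell K u v) : Prop :=
  exists q : v = u, ccast eq_refl q x = id2 K u.

Definition fully_faithful {A B : Ob K} (f : Hom K A B) : Prop :=
  forall (X : Ob K) (a a' : Hom K X A) (b : Cell K (comp K f a) (comp K f a')),
    exists! x : Cell K a a', lw K f x = b.

(* (d,E,c) is a discrete fibration from A to B: for every X, the span of
   categories K(X,A) <- K(X,E) -> K(X,B) is a discrete fibration (i),(ii),(iii). *)
Definition is_dfib {A B E : Ob K} (d : Hom K E A) (c : Hom K E B) : Prop :=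
  forall X : Ob K,
  (forall (e : Hom K X E) (a : Hom K X A) (u : Cell K a (comp K d e)),
     exists! w : {a' : Hom K X E & Cell K a' e},
       (exists p : comp K d (projT1 w) = a, ccast p eq_refl (lw K d (projT2 w)) = u)
       /\ is_id (lw K c (projT2 w)))
  /\ (forall (e : Hom K X E) (b : Hom K X B) (v : Cell K (comp K c e) b),
     exists! w : {b' : Hom K X E & Cell K e b'},
       (exists p : comp K c (projT1 w) = b, ccast eq_refl p (lw K c (projT2 w)) = v)
       /\ is_id (lw K d (projT2 w)))
  (* (iii) : h = (lift of d(h) with codomain e') o (lift of c(h) with domain e) *)
  /\ (forall (e e' : Hom K X E) (h : Cell K e e'),
     exists (x : Hom K X E) (bt : Cell K e x) (gm : Cell K x e'),
       (exists p : comp K c x = comp K c e', ccast eq_refl p (lw K c bt) = lw K c h)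
       /\ is_id (lw K d bt)
       /\ (exists q : comp K d x = comp K d e, ccast q eq_refl (lw K d gm) = lw K d h)
       /\ is_id (lw K c gm)
       /\ vcomp K gm bt = h).

Record terminal := {
  tob : Ob K;
  bang : forall X : Ob K, Hom K X tob;
  bang_uniq : forall (X : Ob K) (f : Hom K X tob), f = bang X;
  cell_uniq : forall (X : Ob K) (f g : Hom K X tob) (x y : Cell K f g), x = y
}.

Definition is_dopfib (T : terminal) {E B : Ob K} (p : Hom K E B) : Prop :=
  is_dfib (bang T E) p.

Definition sq_eq {A B C P : Ob K} (f : Hom K A C) (g : Hom K B C)
  (p : Hom K P A) (q : Hom K P B) (sq : comp K f p = comp K g q)
  {X : Ob K} (h : Hom K X P) : comp K f (comp K p h) = comp K g (comp K q h) :=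
  eq_trans (assoc K f p h)
    (eq_trans (f_equal (fun u => comp K u h) sq) (eq_sym (assoc K g q h))).

(* strict 2-pullback: K(X,P) -> K(X,A) x_{K(X,C)} K(X,B) is an isomorphism of categories *)
Definition is_pullback {A B C P : Ob K} (f : Hom K A C) (g : Hom K B C)
  (p : Hom K P A) (q : Hom K P B) (sq : comp K f p = comp K g q) : Prop :=
  forall X : Ob K,
  (forall (a : Hom K X A) (b : Hom K X B), comp K f a = comp K g b ->
     exists! h : Hom K X P, comp K p h = a /\ comp K q h = b)
  /\ (forall (h h' : Hom K X P) (x : Cell K (comp K p h) (comp K p h'))
        (y : Cell K (comp K q h) (comp K q h')),
      ccast (sq_eq f g p q sq h) (sq_eq f g p q sq h') (lw K f x) = lw K g y ->
      exists! z : Cell K h h', lw K p z = x /\ lw K q z = y).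

(* cotensor of A with the arrow category 2: K(X,A2) ~= [2, K(X,A)] *)
Definition is_cotensor2 {A A2 : Ob K} (s t : Hom K A2 A) (l : Cell K s t) : Prop :=
  forall X : Ob K,
  (forall (a a' : Hom K X A) (th : Cell K a a'),
     exists! h : Hom K X A2,
       exists (e1 : comp K s h = a) (e2 : comp K t h = a'), ccast e1 e2 (rw K l h) = th)
  /\ (forall (h h' : Hom K X A2) (x : Cell K (comp K s h) (comp K s h'))
        (y : Cell K (comp K t h) (comp K t h')),
      vcomp K y (rw K l h) = vcomp K (rw K l h') x ->
      exists! z : Cell K h h', lw K s z = x /\ lw K t z = y).

(* finite (strict, weighted) 2-limits; by Street's theorem these are generated by
   the terminal object, pullbacks and cotensors with 2. *)
Definition finitely_complete : Prop :=
  inhabited terminal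
  /\ (forall (A B C : Ob K) (f : Hom K A C) (g : Hom K B C),
        exists (P : Ob K) (p : Hom K P A) (q : Hom K P B) (sq : comp K f p = comp K g q),
          is_pullback f g p q sq)
  /\ (forall A : Ob K, exists (A2 : Ob K) (s t : Hom K A2 A) (l : Cell K s t),
          is_cotensor2 s t l).

(* Given pullbacks (P,c,k) of p along g and (P',c',k') of p along g', and
   phi : g => g', m : P -> P' is the map of pullbacks induced by the unique
   lifting of phi through p, i.e. G_{p,A}(phi) = m. *)
Definition induced_map (T : terminal) {E B A : Ob K} (p : Hom K E B)
  {g g' : Hom K A B} {P P' : Ob K}
  (c : Hom K P A) (k : Hom K P E) (sq : comp K g c = comp K p k)
  (c' : Hom K P' A) (k' : Hom K P' E)
  (phi : Cell K g g') (m : Hom K P P') : Prop :=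
  comp K c' m = c /\
  exists (k'' : Hom K P E) (vb : Cell K k k'') (e : comp K p k'' = comp K g' c),
    ccast (eq_sym sq) e (lw K p vb) = rw K phi c
    /\ is_id (lw K (bang T E) vb)
    /\ comp K k' m = k''.

(* p classifying: for every A, G_{p,A} : K(A,B) -> DFib(1,A) is fully faithful,
   i.e. bijective on hom-sets; stated for arbitrary choices of the pullbacks. *)
Definition classifying (T : terminal) {E B : Ob K} (p : Hom K E B) : Prop :=
  forall (A : Ob K) (g g' : Hom K A B)
    (P : Ob K) (c : Hom K P A) (k : Hom K P E) (sq : comp K g c = comp K p k),
    is_pullback g p c k sq ->
  forall (P' : Ob K) (c' : Hom K P' A) (k' : Hom K P' E) (sq' : comp K g' c' = comp K p k'),
    is_pullback g' p c' k' sq' ->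
  forall m : Hom K P P',
    comp K (bang T P') m = bang T P -> comp K c' m = c ->
    exists! phi : Cell K g g', induced_map T p c k sq c' k' phi m.

Definition classifying_dopfib (T : terminal) {E B : Ob K} (p : Hom K E B) : Prop :=
  is_dopfib T p /\ classifying T p.

End TwoCatNotions.

(* Main.v *)
Require Import Defs.
From Stdlib Require Import ProofIrrelevance Eqdep.

Section S.
Variable K : TwoCat.

Definition ceq {A B : Ob K} {f g f' g' : Hom K A B} (x : Cell K f g) (y : Cell K f' g') : Prop :=
  existT (fun fg : Hom K A B * Hom K A B => Cell K (fst fg) (snd fg)) (f, g) x
  = existT (fun fg : Hom K A B * Hom K A B => Cell K (fst fg) (snd fg)) (f', g') y.

Lemma ceq_refl {A B} {f g : Hom K A B} (x : Cell K f g) : ceq x x.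
Proof. reflexivity. Qed.
Lemma ceq_sym {A B} {f g f' g' : Hom K A B} (x : Cell K f g) (y : Cell K f' g') : ceq x y -> ceq y x.
Proof. unfold ceq; intro H; symmetry; exact H. Qed.
Lemma ceq_trans {A B} {f g f' g' f'' g'' : Hom K A B} (x : Cell K f g) (y : Cell K f' g') (z : Cell K f'' g'') :
  ceq x y -> ceq y z -> ceq x z.
Proof. unfold ceq; intros H1 H2; rewrite H1; exact H2. Qed.
Lemma ceq_ends {A B} {f g f' g' : Hom K A B} (x : Cell K f g) (y : Cell K f' g') : ceq x y -> f = f' /\ g = g'.
Proof. intro H. apply (f_equal (@projT1 _ _)) in H. simpl in H. injection H. auto. Qed.
Lemma ceq_eq {A B} {f g : Hom K A B} (x y : Cell K f g) : ceq x y -> x = y.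
Proof. intro H. exact (inj_pair2 _ _ _ _ _ H). Qed.
Lemma ceq_cast {A B} {f g f' g' : Hom K A B} (p : f = f') (q : g = g') (x : Cell K f g) :
  ceq (castC (@Cell K A B) p q x) x.
Proof. destruct p, q. reflexivity. Qed.
Lemma cast_ceq {A B} {f g f' g' : Hom K A B} (p : f = f') (q : g = g') (x : Cell K f g) (y : Cell K f' g') :
  ceq x y -> castC (@Cell K A B) p q x = y.
Proof. intro H. apply ceq_eq. eapply ceq_trans. apply ceq_cast. exact H. Qed.

Lemma ceq_lw {A B C} (h : Hom K B C) {f g f' g' : Hom K A B} (x : Cell K f g) (y : Cell K f' g') :
  ceq x y -> ceq (lw K h x) (lw K h y).
Proof. intro H. destruct (ceq_ends _ _ H) as [e1 e2]. subst. apply ceq_eq in H. subst. reflexivity. Qed.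
Lemma ceq_rw {A B C} {f g f' g' : Hom K B C} (x : Cell K f g) (y : Cell K f' g') (k : Hom K A B) :
  ceq x y -> ceq (rw K x k) (rw K y k).
Proof. intro H. destruct (ceq_ends _ _ H) as [e1 e2]. subst. apply ceq_eq in H. subst. reflexivity. Qed.
Lemma ceq_lw_comp {A B C D} (k : Hom K C D) (h : Hom K B C) {f g : Hom K A B} (x : Cell K f g) :
  ceq (lw K k (lw K h x)) (lw K (comp K k h) x).
Proof. rewrite <- (lw_comp K k h x). apply ceq_sym, ceq_cast. Qed.
Lemma ceq_lw_rw {A B C D} (h : Hom K C D) {f g : Hom K B C} (x : Cell K f g) (k : Hom K A B) :
  ceq (lw K h (rw K x k)) (rw K (lw K h x) k).
Proof. rewrite <- (lw_rw K h x k). apply ceq_sym, ceq_cast. Qed.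
Lemma ceq_lw_eq {A B C} {h h' : Hom K B C} (e : h = h') {f g : Hom K A B} (x : Cell K f g) :
  ceq (lw K h x) (lw K h' x).
Proof. destruct e; reflexivity. Qed.
Lemma ceq_id2 {A B} {u u' : Hom K A B} (e : u = u') : ceq (id2 K u) (id2 K u').
Proof. destruct e; reflexivity. Qed.
Lemma is_id_ceq {X Y} {u v : Hom K X Y} (x : Cell K u v) : is_id K x <-> ceq x (id2 K u).
Proof.
  split.
  - intros [q Hq]. rewrite <- Hq. apply ceq_sym, ceq_cast.
  - intro H. destruct (ceq_ends _ _ H) as [_ q]. exists q. apply cast_ceq. exact H.
Qed.

Lemma ceq_lw_id2 {A B C} (h : Hom K B C) (f : Hom K A B) : ceq (lw K h (id2 K f)) (id2 K (comp K h f)).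
Proof. rewrite lw_id2. apply ceq_refl. Qed.

Variable T : terminal K.

Lemma is_id_term {X} {u v : Hom K X (tob K T)} (x : Cell K u v) : is_id K x.
Proof.
  assert (q : v = u) by (rewrite (bang_uniq K T X u), (bang_uniq K T X v); reflexivity).
  exists q. apply cell_uniq.
Qed.

Section PB.
Context {A B C P : Ob K} (f : Hom K A C) (g : Hom K B C) (p : Hom K P A) (q : Hom K P B)
  (sq : comp K f p = comp K g q) (H : is_pullback K f g p q sq).

Lemma pb_ex X (a : Hom K X A) (b : Hom K X B) : comp K f a = comp K g b ->
  exists h : Hom K X P, comp K p h = a /\ comp K q h = b.
Proof. intro E. destruct (proj1 (H X) a b E) as [h [Hh _]]. eauto. Qed.

Lemma pb_uniq X (h h' : Hom K X P) : comp K p h = comp K p h' -> comp K q h = comp K q h' -> h = h'.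
Proof.
  intros E1 E2.
  destruct (proj1 (H X) _ _ (sq_eq K f g p q sq h)) as [h0 [_ U]].
  transitivity h0; [symmetry|]; apply U; split; congruence.
Qed.

Lemma pb_cell_ex X (h h' : Hom K X P) (x : Cell K (comp K p h) (comp K p h'))
  (y : Cell K (comp K q h) (comp K q h')) : ceq (lw K f x) (lw K g y) ->
  exists z : Cell K h h', lw K p z = x /\ lw K q z = y.
Proof. intro E. destruct (proj2 (H X) h h' x y (cast_ceq _ _ _ _ E)) as [z [Hz _]]. eauto. Qed.

Lemma pb_cell_uniq X (h h' : Hom K X P) (z z' : Cell K h h') :
  lw K p z = lw K p z' -> lw K q z = lw K q z' -> z = z'.
Proof.
  intros E1 E2.
  assert (E : ceq (lw K f (lw K p z)) (lw K g (lw K q z))).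
  { eapply ceq_trans. apply ceq_lw_comp. eapply ceq_trans. apply (ceq_lw_eq sq).
    apply ceq_sym, ceq_lw_comp. }
  destruct (proj2 (H X) h h' _ _ (cast_ceq _ _ _ _ E)) as [z0 [_ U]].
  transitivity z0; [symmetry|]; apply U; split; congruence.
Qed.
End PB.

Lemma dop_lift {E B} (p : Hom K E B) : is_dopfib K T p -> forall X (e : Hom K X E) (b : Hom K X B)
  (v : Cell K (comp K p e) b), exists (b' : Hom K X E) (y : Cell K e b'), ceq (lw K p y) v.
Proof.
  intros Hp X e b v. destruct (Hp X) as [_ [Hii _]].
  destruct (Hii e b v) as [[b' y] [[[pf Hpf] _] _]]. exists b', y. cbn [projT1 projT2] in *.
  rewrite <- Hpf. apply ceq_sym, ceq_cast.
Qed.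

Lemma dop_uniq {E B} (p : Hom K E B) : is_dopfib K T p -> forall X (e b1 b2 : Hom K X E)
  (y1 : Cell K e b1) (y2 : Cell K e b2), ceq (lw K p y1) (lw K p y2) ->
  existT (fun b' => Cell K e b') b1 y1 = existT _ b2 y2.
Proof.
  intros Hp X e b1 b2 y1 y2 Hc. destruct (Hp X) as [_ [Hii _]].
  destruct (Hii e (comp K p b2) (lw K p y2)) as [w [_ U]].
  transitivity w; [symmetry|]; apply U; split; cbn [projT1 projT2].
  - destruct (ceq_ends _ _ Hc) as [_ e2]. exists e2. apply cast_ceq; exact Hc.
  - apply is_id_term.
  - exists eq_refl. reflexivity.
  - apply is_id_term.
Qed.

Lemma dop_i_uniq {E B} (p : Hom K E B) : is_dopfib K T p -> forall X (e a' : Hom K X E)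
  (x : Cell K a' e), ceq (lw K p x) (id2 K (comp K p a')) ->
  existT (fun a0 => Cell K a0 e) a' x = existT (fun a0 => Cell K a0 e) e (id2 K e).
Proof.
  intros Hp X e a' x Hx. destruct (Hp X) as [Hi _].
  destruct (Hi e (comp K (bang K T E) e) (id2 K _)) as [w [_ U]].
  transitivity w; [symmetry|]; apply U; split; cbn [projT1 projT2].
  - assert (pf : comp K (bang K T E) a' = comp K (bang K T E) e).
    { rewrite (bang_uniq K T X (comp K (bang K T E) a')). symmetry; apply bang_uniq. }
    exists pf. apply cell_uniq.
  - apply is_id_ceq. exact Hx.
  - exists eq_refl. apply cell_uniq.
  - apply is_id_ceq. rewrite lw_id2. apply ceq_refl.
Qed.

Lemma induced_iff {E B A} (p : Hom K E B) {g g' : Hom K A B} {P P'} (c : Hom K P A) (k : Hom K P E)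
  (sq : comp K g c = comp K p k) (c' : Hom K P' A) (k' : Hom K P' E) (phi : Cell K g g')
  (m : Hom K P P') :
  induced_map K T p c k sq c' k' phi m <->
  comp K c' m = c /\ exists vb : Cell K k (comp K k' m), ceq (lw K p vb) (rw K phi c).
Proof.
  split.
  - intros [Hm [k'' [vb [e [Hv [_ Hk]]]]]]. split; auto. subst k''. exists vb.
    rewrite <- Hv. apply ceq_sym, ceq_cast.
  - intros [Hm [vb Hv]]. split; auto. exists (comp K k' m), vb.
    destruct (ceq_ends _ _ Hv) as [_ e]. exists e.
    split; [apply cast_ceq; exact Hv | split; [apply is_id_term | reflexivity]].
Qed.

Tactic Notation "cstep" uconstr(L) := eapply ceq_trans; [eapply L|].
Ltac cdone := first [reflexivity | eassumption].

Section Main.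
Context {Om Omb A Ab : Ob K} (tau : Hom K Omb Om) (f : Hom K A Om) (tauf : Hom K Ab A)
  (fb : Hom K Ab Omb) (sq : comp K f tauf = comp K tau fb) (Hpb : is_pullback K f tau tauf fb sq).

Lemma pasting {A' P} (g : Hom K A' A) (c : Hom K P A') (k : Hom K P Ab)
  (s1 : comp K g c = comp K tauf k) (H1 : is_pullback K g tauf c k s1)
  (s2 : comp K (comp K f g) c = comp K tau (comp K fb k)) :
  is_pullback K (comp K f g) tau c (comp K fb k) s2.
Proof.
  intro X. split.
  - intros a b E.
    assert (E' : comp K f (comp K g a) = comp K tau b) by (rewrite assoc; exact E).
    destruct (pb_ex _ _ _ _ _ Hpb X _ _ E') as [n [Hn1 Hn2]].
    destruct (pb_ex _ _ _ _ _ H1 X a n (eq_sym Hn1)) as [h [Hh1 Hh2]].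
    exists h. split.
    + split; [exact Hh1|]. rewrite <- assoc, Hh2. exact Hn2.
    + intros h' [E1 E2]. apply (pb_uniq _ _ _ _ _ H1); [congruence|].
      apply (pb_uniq _ _ _ _ _ Hpb).
      * rewrite Hh2, Hn1, assoc, <- s1, <- assoc, E1. reflexivity.
      * rewrite Hh2, Hn2, assoc, E2. reflexivity.
  - intros h h' x y Hc.
    assert (Hc' : ceq (lw K (comp K f g) x) (lw K tau y)).
    { rewrite <- Hc. apply ceq_sym, ceq_cast. }
    set (x1 := ccast K (sq_eq K g tauf c k s1 h) (sq_eq K g tauf c k s1 h') (lw K g x)).
    set (y1 := ccast K (eq_sym (assoc K fb k h)) (eq_sym (assoc K fb k h')) y).
    assert (Hx1 : ceq x1 (lw K g x)) by apply ceq_cast.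
    assert (Hy1 : ceq y1 y) by apply ceq_cast.
    destruct (pb_cell_ex _ _ _ _ _ Hpb X _ _ x1 y1) as [z1 [Hz1 Hz2]].
    { cstep (ceq_lw f _ _ Hx1). cstep ceq_lw_comp. cstep Hc'.
      apply ceq_lw, ceq_sym, Hy1. }
    destruct (pb_cell_ex _ _ _ _ _ H1 X _ _ x z1) as [z [Hz3 Hz4]].
    { rewrite Hz1. apply ceq_sym, Hx1. }
    exists z. split.
    + split; [exact Hz3|]. apply ceq_eq. cstep (ceq_sym _ _ (ceq_lw_comp fb k z)).
      rewrite Hz4, Hz2. exact Hy1.
    + intros z' [E1 E2]. apply (pb_cell_uniq _ _ _ _ _ H1); [congruence|].
      apply (pb_cell_uniq _ _ _ _ _ Hpb).
      * rewrite Hz4, Hz1. apply ceq_eq. cstep Hx1. rewrite <- E1.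
        cstep ceq_lw_comp. cstep (ceq_lw_eq s1). apply ceq_sym, ceq_lw_comp.
      * rewrite Hz4, Hz2. apply ceq_eq. cstep Hy1. rewrite <- E2.
        apply ceq_sym, ceq_lw_comp.
Qed.

Lemma pb_dopfib : is_dopfib K T tau -> is_dopfib K T tauf.
Proof.
  intros Ht X. split; [|split].
  - intros e a u. exists (existT (fun a0 => Cell K a0 e) e (id2 K e)). split.
    + split; cbn [projT1 projT2].
      * assert (pf : comp K (bang K T Ab) e = a)
          by (rewrite (bang_uniq K T X a); apply bang_uniq).
        exists pf. apply cell_uniq.
      * apply is_id_ceq. rewrite lw_id2. apply ceq_refl.
    + intros [a' x] [_ Hid]. cbn [projT1 projT2] in Hid. apply is_id_ceq in Hid.
      assert (Hc : ceq (lw K tau (lw K fb x)) (id2 K (comp K tau (comp K fb a')))).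
      { cstep ceq_lw_comp. cstep (ceq_lw_eq (eq_sym sq)).
        cstep (ceq_sym _ _ (ceq_lw_comp f tauf x)). cstep (ceq_lw f _ _ Hid).
        cstep ceq_lw_id2. apply ceq_id2. apply (sq_eq K _ _ _ _ sq). }
      pose proof (dop_i_uniq tau Ht X _ _ _ Hc) as E1.
      assert (Ea : a' = e).
      { apply (pb_uniq _ _ _ _ _ Hpb).
        - destruct (ceq_ends _ _ Hid) as [_ q]. symmetry. exact q.
        - exact (f_equal (@projT1 _ _) E1). }
      subst a'. apply inj_pair2 in E1. f_equal.
      apply (pb_cell_uniq _ _ _ _ _ Hpb).
      * rewrite lw_id2. symmetry. apply ceq_eq. exact Hid.
      * rewrite lw_id2. symmetry. exact E1.
  - intros e b v.
    destruct (dop_lift tau Ht X (comp K fb e) (comp K f b)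
      (ccast K (sq_eq K f tau tauf fb sq e) eq_refl (lw K f v))) as [b2 [y Hy]].
    assert (Hy' : ceq (lw K tau y) (lw K f v)) by (cstep Hy; apply ceq_cast).
    destruct (ceq_ends _ _ Hy') as [_ Eb2].
    assert (Eb2' : comp K f b = comp K tau b2) by (symmetry; exact Eb2).
    destruct (pb_ex _ _ _ _ _ Hpb X b b2 Eb2') as [b' [Hb1 Hb2]]. subst b b2.
    destruct (pb_cell_ex _ _ _ _ _ Hpb X e b' v y (ceq_sym _ _ Hy')) as [z [Hz1 Hz2]].
    exists (existT _ b' z). split.
    + split; cbn [projT1 projT2].
      * exists eq_refl. exact Hz1.
      * apply is_id_term.
    + intros [b'' z'] [[pf Hpf] _]. cbn [projT1 projT2] in *.
      assert (Hz' : ceq (lw K tauf z') v) by (rewrite <- Hpf; apply ceq_sym, ceq_cast).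
      assert (Hc : ceq (lw K tau (lw K fb z')) (lw K tau y)).
      { cstep ceq_lw_comp. cstep (ceq_lw_eq (eq_sym sq)).
        cstep (ceq_sym _ _ (ceq_lw_comp f tauf z')). cstep (ceq_lw f _ _ Hz').
        apply ceq_sym, Hy'. }
      pose proof (dop_uniq tau Ht X _ _ _ _ _ Hc) as E2.
      assert (b'' = b').
      { apply (pb_uniq _ _ _ _ _ Hpb); [exact pf | exact (f_equal (@projT1 _ _) E2)]. }
      subst b''. apply inj_pair2 in E2. f_equal.
      apply (pb_cell_uniq _ _ _ _ _ Hpb).
      * rewrite Hz1. symmetry. apply ceq_eq. exact Hz'.
      * rewrite Hz2, E2. reflexivity.
  - intros e e' h. exists e', h, (id2 K e').
    refine (conj _ (conj _ (conj _ (conj _ _)))).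
    + exists eq_refl. reflexivity.
    + apply is_id_term.
    + assert (q : comp K (bang K T Ab) e' = comp K (bang K T Ab) e)
        by (rewrite (bang_uniq K T X (comp K (bang K T Ab) e')); symmetry; apply bang_uniq).
      exists q. apply cell_uniq.
    + apply is_id_ceq. rewrite lw_id2. apply ceq_refl.
    + apply vidl.
Qed.

Section Trans.
Context {X P P' : Ob K} (a a' : Hom K X A) (c : Hom K P X) (k : Hom K P Ab)
  (s1 : comp K a c = comp K tauf k) (c' : Hom K P' X) (k' : Hom K P' Ab)
  (s1' : comp K a' c' = comp K tauf k')
  (s2 : comp K (comp K f a) c = comp K tau (comp K fb k)) (m : Hom K P P').

Lemma T1 (phi : Cell K a a') :
  induced_map K T tauf c k s1 c' k' phi m ->
  induced_map K T tau c (comp K fb k) s2 c' (comp K fb k') (lw K f phi) m.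
Proof.
  intro H. apply induced_iff in H. apply induced_iff. destruct H as [Hm [vb Hv]].
  split; [exact Hm|].
  exists (ccast K eq_refl (assoc K fb k' m) (lw K fb vb)).
  cstep (ceq_lw tau _ _ (ceq_cast _ _ _)). cstep ceq_lw_comp.
  cstep (ceq_lw_eq (eq_sym sq)). cstep (ceq_sym _ _ (ceq_lw_comp f tauf vb)).
  cstep (ceq_lw f _ _ Hv). apply ceq_lw_rw.
Qed.

Lemma T2 (phi : Cell K a a') :
  induced_map K T tau c (comp K fb k) s2 c' (comp K fb k') (lw K f phi) m ->
  induced_map K T tauf c k s1 c' k' phi m.
Proof.
  intro H. apply induced_iff in H. apply induced_iff. destruct H as [Hm [vb2 Hv]].
  split; [exact Hm|].
  assert (E2 : comp K a' c = comp K tauf (comp K k' m)).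
  { rewrite <- Hm. exact (sq_eq K _ _ _ _ s1' m). }
  set (x := ccast K s1 E2 (rw K phi c)).
  set (y := ccast K eq_refl (eq_sym (assoc K fb k' m)) vb2).
  assert (Hx : ceq x (rw K phi c)) by apply ceq_cast.
  assert (Hy : ceq y vb2) by apply ceq_cast.
  destruct (pb_cell_ex _ _ _ _ _ Hpb P k (comp K k' m) x y) as [vb [Hv1 _]].
  { cstep (ceq_lw f _ _ Hx). cstep ceq_lw_rw. cstep (ceq_sym _ _ Hv).
    apply ceq_lw, ceq_sym, Hy. }
  exists vb. rewrite Hv1. exact Hx.
Qed.
End Trans.

End Main.
End S.

Lemma mk_s2 (K : TwoCat) {Om Omb A Ab X P : Ob K} (tau : Hom K Omb Om) (f : Hom K A Om)
  (tauf : Hom K Ab A) (fb : Hom K Ab Omb) (sq : comp K f tauf = comp K tau fb)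
  (a : Hom K X A) (c : Hom K P X) (k : Hom K P Ab) (s1 : comp K a c = comp K tauf k) :
  comp K (comp K f a) c = comp K tau (comp K fb k).
Proof. rewrite <- assoc, s1, assoc, sq, <- assoc. reflexivity. Qed.

Theorem proposition4p4 (K : TwoCat) (HK : finitely_complete K) (T : terminal K)
  (Om Omb : Ob K) (tau : Hom K Omb Om) (Htau : classifying_dopfib K T tau)
  (A : Ob K) (f : Hom K A Om)
  (Ab : Ob K) (tauf : Hom K Ab A) (fb : Hom K Ab Omb)
  (sq : comp K f tauf = comp K tau fb) (Hpb : is_pullback K f tau tauf fb sq) :
  classifying_dopfib K T tauf <-> fully_faithful K f.
Proof.
  destruct Htau as [Hdop Hcl]. destruct HK as [_ [Hpbex _]].
  split.
  - intros [Hdopf Hclf] X a a' b.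
    destruct (Hpbex _ _ _ a tauf) as [P [c [k [s1 H1]]]].
    destruct (Hpbex _ _ _ a' tauf) as [P' [c' [k' [s1' H1']]]].
    pose (s2 := mk_s2 K tau f tauf fb sq a c k s1).
    pose (s2' := mk_s2 K tau f tauf fb sq a' c' k' s1').
    pose proof (pasting K tau f tauf fb sq Hpb a c k s1 H1 s2) as H2.
    pose proof (pasting K tau f tauf fb sq Hpb a' c' k' s1' H1' s2') as H2'.
    destruct (dop_lift K T tau Hdop P (comp K fb k) (comp K (comp K f a') c)
      (ccast K s2 eq_refl (rw K b c))) as [k2 [y Hy]].
    assert (Hy' : ceq K (lw K tau y) (rw K b c)) by (eapply ceq_trans; [exact Hy| apply ceq_cast]).
    destruct (ceq_ends K _ _ Hy') as [_ Ek2].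
    assert (E3 : comp K f (comp K a' c) = comp K tau k2) by (rewrite Ek2, assoc; reflexivity).
    destruct (pb_ex K _ _ _ _ _ Hpb P _ _ E3) as [n [Hn1 Hn2]]. subst k2.
    destruct (pb_ex K _ _ _ _ _ H1' P c n (eq_sym Hn1)) as [m [Hm1 Hm2]]. subst n.
    assert (Hbang : comp K (bang K T P') m = bang K T P) by apply bang_uniq.
    assert (Hb : induced_map K T tau c (comp K fb k) s2 c' (comp K fb k') b m).
    { apply induced_iff. split; [exact Hm1|].
      exists (ccast K eq_refl (assoc K fb k' m) y).
      eapply ceq_trans; [apply ceq_lw, ceq_cast|]. exact Hy'. }
    destruct (Hclf X a a' P c k s1 H1 P' c' k' s1' H1' m Hbang Hm1) as [phi [Hphi Uphi]].
    destruct (Hcl X (comp K f a) (comp K f a') P c (comp K fb k) s2 H2 P' c' (comp K fb k') s2' H2' m Hbang Hm1) as [psi [Hpsi Upsi]].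
    exists phi. split.
    + rewrite <- (Upsi _ (T1 K T tau f tauf fb sq a a' c k s1 c' k' s2 m phi Hphi)).
      apply Upsi. exact Hb.
    + intros x Hx. apply Uphi. apply (T2 K T tau f tauf fb sq Hpb a a' c k s1 c' k' s1' s2 m).
      rewrite Hx. exact Hb.
  - intros Hff. split.
    + exact (pb_dopfib K T tau f tauf fb sq Hpb Hdop).
    + intros X g g' P c k s1 H1 P' c' k' s1' H1' m Hbang Hm.
      pose (s2 := mk_s2 K tau f tauf fb sq g c k s1).
      pose (s2' := mk_s2 K tau f tauf fb sq g' c' k' s1').
      pose proof (pasting K tau f tauf fb sq Hpb g c k s1 H1 s2) as H2.
      pose proof (pasting K tau f tauf fb sq Hpb g' c' k' s1' H1' s2') as H2'.
      destruct (Hcl X (comp K f g) (comp K f g') P c (comp K fb k) s2 H2 P' c' (comp K fb k') s2' H2' m Hbang Hm) as [psi [Hpsi Upsi]].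
      destruct (Hff X g g' psi) as [phi [Hphi Uff]].
      exists phi. split.
      * apply (T2 K T tau f tauf fb sq Hpb g g' c k s1 c' k' s1' s2 m).
        rewrite Hphi. exact Hpsi.
      * intros phi' Hphi'. apply Uff. symmetry. apply Upsi.
        exact (T1 K T tau f tauf fb sq g g' c k s1 c' k' s2 m phi' Hphi').
Qed.
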